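(* Let $m\ge 1$ and $n\ge 2$ be integers. Assume that $G$ is a topological group such that $c_0(G)=c(G)$ and this subgroup has index $n$ in $G$. Then a space $X$ has precisely $m$ connected components if and only if the connected component $c(C_p(X,G))$ of the identity has index $n^m$ in $C_p(X,G)$.
   Context: All spaces are Tychonoff and non-empty; topological groups are Hausdorff. For a topological group $K$, $c(K)$ is the connected component of the identity and $c_0(K)$ is the pathwise connected component of the identity (union of all pathwise connected subsets containing the identity). $C_p(X,G)$ is the group of continuous maps $X\to G$ with pointwise operations and the topology of pointwise convergence. *)

(* Defs.v *)
From HB Require Import structures.
From mathcomp Require Import all_boot all_order all_algebra.
From mathcomp Require Import all_classical all_reals all_analysis.
Set Implicit Arguments. Unset Strict Implicit. Unset Printing Implicit Defensive.
Import Order.TTheory GRing.Theory Num.Theory.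
Import numFieldNormedType.Exports.
Local Open Scope classical_set_scope.
Local Open Scope ring_scope.

Definition completely_regular (R : realType) (X : topologicalType) : Prop :=
  forall (a : X) (B : set X), closed B -> ~ B a ->
    exists f : X -> R,
      [/\ continuous f, (forall x, 0 <= f x <= 1), f a = 0 &
          (forall b, B b -> f b = 1)].

Definition tychonoff_space (R : realType) (X : topologicalType) : Prop :=
  completely_regular R X /\ hausdorff_space X.

Definition is_topological_group (G : topologicalType)
  (mul : G -> G -> G) (inv : G -> G) (one : G) : Prop :=
  [/\ (forall x y z, mul x (mul y z) = mul (mul x y) z),
      (forall x, mul one x = x /\ mul x one = x),
      (forall x, mul (inv x) x = one /\ mul x (inv x) = one),
      continuous (fun p : G * G => mul p.1 p.2) &
      continuous inv /\ hausdorff_space G].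

Definition path_connected (R : realType) (T : topologicalType) (A : set T) : Prop :=
  forall x y, A x -> A y ->
    exists f : R -> T,
      [/\ {within `[0%R, 1%R], continuous f}, f 0%R = x, f 1%R = y &
          f @` `[0%R, 1%R] `<=` A].

Definition path_component (R : realType) (T : topologicalType) (A : set T) (x : T) :=
  \bigcup_(B in [set C : set T | [/\ C x, C `<=` A & path_connected R C]]) B.

Definition left_cosets (T : Type) (mul : T -> T -> T) (K H : set T) : set (set T) :=
  [set [set mul x h | h in H] | x in K].

Definition has_index (T : Type) (mul : T -> T -> T) (K H : set T) (k : nat) : Prop :=
  (left_cosets mul K H #= `I_k)%card.

Definition components (X : topologicalType) : set (set X) :=
  [set connected_component [set: X] x | x in [set: X]].

Definition Cp (X G : topologicalType) : set {ptws X -> G} :=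
  [set f : {ptws X -> G} | continuous (f : X -> G)].

Definition ptws_mul (X G : topologicalType) (mul : G -> G -> G)
  (f g : {ptws X -> G}) : {ptws X -> G} := fun x => mul (f x) (g x).
Definition ptws_one (X G : topologicalType) (one : G) : {ptws X -> G} :=
  fun _ => one.

Arguments components X : clear implicits.
Arguments Cp X G : clear implicits.
Arguments ptws_one X G one : clear implicits.

(* Main.v *)
Require Import Defs.
From HB Require Import structures.
From mathcomp Require Import all_boot all_order all_algebra.
From mathcomp Require Import all_classical all_reals all_analysis.
From mathcomp Require Import finmap.
From mathcomp Require Import lra.
Import Order.TTheory GRing.Theory Num.Theory numFieldNormedType.Exports.
Local Open Scope classical_set_scope.
Definition grp_laws (T : Type) (mul : T -> T -> T) (inv : T -> T) (one : T) :=
  [/\ (forall x y z, mul x (mul y z) = mul (mul x y) z),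
      (forall x, mul one x = x), (forall x, mul x one = x),
      (forall x, mul (inv x) x = one) & (forall x, mul x (inv x) = one)].
Arguments grp_laws {T}.

Section GroupAlg.
Variables (T : Type) (mul : T -> T -> T) (inv : T -> T) (one : T).
Hypothesis gl : grp_laws mul inv one.
Let mulA : forall x y z, mul x (mul y z) = mul (mul x y) z.
Proof. by case: gl. Qed.
Let mul1g : forall x, mul one x = x.
Proof. by case: gl. Qed.
Let mulg1 : forall x, mul x one = x.
Proof. by case: gl. Qed.
Let mulVg : forall x, mul (inv x) x = one.
Proof. by case: gl. Qed.
Let mulgV : forall x, mul x (inv x) = one.
Proof. by case: gl. Qed.

Lemma ga_mulKg a b : mul (inv a) (mul a b) = b.
Proof. by rewrite mulA mulVg mul1g. Qed.
Lemma ga_mulKVg a b : mul a (mul (inv a) b) = b.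
Proof. by rewrite mulA mulgV mul1g. Qed.
Lemma ga_inv_uniq x y : mul x y = one -> x = inv y.
Proof. by move=> e; rewrite -[x]mulg1 -(mulgV y) mulA e mul1g. Qed.
Lemma ga_invK a : inv (inv a) = a.
Proof. by apply/esym/ga_inv_uniq. Qed.
Lemma ga_invM a b : inv (mul a b) = mul (inv b) (inv a).
Proof.
apply/esym/ga_inv_uniq.
by rewrite -mulA (mulA (inv a)) mulVg mul1g mulVg.
Qed.
Lemma ga_inv1 : inv one = one.
Proof. by apply/esym/ga_inv_uniq. Qed.

Variable H : set T.
Hypotheses (H1 : H one) (HM : forall a b, H a -> H b -> H (mul a b))
  (HV : forall a, H a -> H (inv a)).

Lemma ga_coset_eqP a b :
  [set mul a h | h in H] = [set mul b h | h in H] <-> H (mul (inv a) b).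
Proof.
split=> [e|Hab].
  have : [set mul a h | h in H] b by rewrite e; exists one => //; exact: mulg1.
  by case=> h Hh <-; rewrite ga_mulKg.
apply/seteqP; split=> _ [h Hh <-].
  exists (mul (inv (mul (inv a) b)) h); first by apply: HM => //; exact: HV.
  by rewrite ga_invM ga_invK -mulA ga_mulKVg.
exists (mul (mul (inv a) b) h); first exact: HM.
by rewrite -mulA ga_mulKVg.
Qed.
End GroupAlg.
Arguments ga_mulKg {T mul inv one}.
Arguments ga_mulKVg {T mul inv one}.
Arguments ga_inv_uniq {T mul inv one}.
Arguments ga_invK {T mul inv one}.
Arguments ga_invM {T mul inv one}.
Arguments ga_inv1 {T mul inv one}.
Arguments ga_coset_eqP {T mul inv one}.
Lemma within_comp (T U V : topologicalType) (A : set U) (B : set T)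
  (f : T -> U) (g : U -> V) :
  {within A, continuous g} -> {within B, continuous f} ->
  (forall x, B x -> A (f x)) -> {within B, continuous (g \o f)}.
Proof.
move=> cg cf fBA; rewrite continuous_subspace_in => b /set_mem Bb.
have Afb := fBA _ Bb.
move: cg; rewrite continuous_subspace_in => /(_ (f b) (mem_set Afb)) cg.
move: cf; rewrite continuous_subspace_in => /(_ b (mem_set Bb)) cf.
move=> W /= Wn.
have HN : nbhs_subspace (f b) (g @^-1` W) := cg W Wn.
rewrite -(nbhs_subspace_in Afb) in HN.
have HM : nbhs_subspace b (f @^-1` [set y | A y -> W (g y)]) := cf _ HN.
rewrite -(nbhs_subspace_in Bb) in HM.
change (@nbhs_subspace _ B b ((g \o f) @^-1` W)).
rewrite -(nbhs_subspace_in Bb).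
move: HM; rewrite /within /=; apply: (@filterS _ (nbhs b)) => z H Bz; exact: (H Bz (fBA _ Bz)).
Qed.
Lemma ptws_cont (T : topologicalType) (X : choiceType) (G : topologicalType)
  (F : T -> {ptws X -> G}) : (forall x, continuous (fun t => F t x)) -> continuous F.
Proof.
move=> cF t; apply/cvg_sup => i.
apply/cvg_image.
  apply/seteqP; split => // y _; exists (fun=> y) => //.
move=> W /= Wn.
exists [set g : {ptws X -> G} | W (g i)].
  exact: (cF i t W Wn).
apply/seteqP; split => [y [g Wg <-]//|y Wy]; exists (fun=> y) => //.
Qed.
Lemma ptws_nbhs_fin (X : choiceType) (G : topologicalType) (h : {ptws X -> G})
  (N : set {ptws X -> G}) : nbhs h N ->
  exists s : seq X, forall g : {ptws X -> G}, (forall x, x \in s -> g x = h x) -> N g.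
Proof.
move=> [P [[Q QfinP PQ] Ph] PN].
rewrite -PQ in Ph; case: Ph => V JV Vh.
have [L Lsub VL] := QfinP _ JV.
suff [s Hs] : exists s : seq X, forall g : {ptws X -> G},
    (forall x, x \in s -> g x = h x) -> forall M, M \in enum_fset L -> M g.
  exists s => g Hg; apply: PN; rewrite -PQ; exists V => //.
  rewrite -VL; cbn; move=> M ML; exact: (Hs g Hg M ML).
have : forall M, M \in enum_fset L -> M \in L by [].
have hL : forall M, M \in L -> M h.
  by move=> M ML; move: Vh; rewrite -VL; apply.
elim: (enum_fset L) => [|M l IH] HL.
  by exists [::] => g _ M.
have [s Hs] : exists s : seq X, forall g : {ptws X -> G},
    (forall x, x \in s -> g x = h x) -> forall M, M \in l -> M g.
  by apply: IH => M0 M0l; apply: HL; rewrite inE M0l orbT.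
have ML : M \in L by apply: HL; rewrite inE eqxx.
have := Lsub _ ML; move/set_mem => -[i _ [A oA AM]].
exists (i :: s) => g Hg M0; rewrite inE => /orP[/eqP ->|M0l].
  rewrite -AM /= (Hg i); last by rewrite inE eqxx.
  by have := hL _ ML; rewrite -AM.
by apply: Hs => // x xs; apply: Hg; rewrite inE xs orbT.
Qed.

Lemma eval_cont (X : choiceType) (G : topologicalType) (x : X) :
  continuous (fun g : {ptws X -> G} => g x).
Proof.
move=> g W Wn; exact: (@proj_continuous X (fun=> G) x g W Wn).
Qed.

Lemma connected_add_closure (T : topologicalType) (A : set T) (x : T) :
  connected A -> closure A x -> connected (A `|` [set x]).
Proof.
move=> cA clx; apply/connectedP => E [E0 EU sE].
have AE : A `<=` E false `|` E true by rewrite -EU; apply: subsetUl.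
have xE : (E false `|` E true) x by rewrite -EU; right.
have [b Ab] : exists b, A `<=` E b.
  by have [h|h] := connected_subset sE AE cA; [exists false|exists true].
have xEb : E b x.
  apply: contrapT => nEb.
  have xnb : E (~~ b) x by case: b Ab nEb => Ab nEb; case: xE.
  have : closure (E b) `&` E (~~ b) = set0.
    by case: b Ab nEb xnb => _ _ _; case: sE => // _; rewrite setIC.
  apply/eqP/set0P; exists x; split => //; exact: (closureS Ab).
have : E (~~ b) `<=` E b.
  move=> y Ey; have : (A `|` [set x]) y by rewrite EU; case: b {Ab xEb} Ey => ?; [left|right].
  by case=> [/Ab //|->].
move=> sub; have [y Ey] := E0 (~~ b).
move/separated_disjoint : sE; apply/eqP/set0P; exists y.
by case: b {Ab xEb} sub Ey => sub Ey; split => //; exact: sub.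
Qed.

Lemma comp_mulP (T : topologicalType) (A : set T) (o : T) (m : T -> T) b :
  connected_component A o (m o) -> connected_component A o b ->
  continuous m -> (forall y, A y -> A (m y)) -> connected_component A o (m b).
Proof.
move=> Kmo Kb cm Am.
have Ao : A o by apply: contrapT => nAo; move: Kb; rewrite connected_component_out.
have sub : (m @` connected_component A o `|` connected_component A o) `<=`
    connected_component A o.
  apply: connected_component_max.
  - by right; exact: connected_component_refl Ao.
  - move=> y [[z Kz <-]|Ky]; last exact: connected_component_sub Ky.
    by apply: Am; exact: connected_component_sub Kz.
  - apply: connectedU.
    + exists (m o); split => //; exists o => //.
      exact: connected_component_refl Ao.
    + apply: connected_continuous_connected; first exact: component_connected.
      exact: continuous_subspaceT.
    + exact: component_connected.
by apply: sub; left; exists b.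
Qed.
Lemma aff_cont (T : topologicalType) (R : realType) (f : T -> R) (g : T -> R) :
  continuous f -> continuous g -> continuous (fun z => 1 - f z * (1 - g z))%R.
Proof.
move=> cf cg z.
have -> : (fun z => 1 - f z * (1 - g z))%R = (cst 1 - (f \* (cst 1 - g)))%R.
  by apply: funext => y.
apply: continuousB; first exact: cst_continuous.
apply: continuousM; first exact: cf.
apply: continuousB; first exact: cst_continuous.
exact: cg.
Qed.

Lemma range01 (R : realType) (t a : R) : (0 <= t <= 1)%R -> (0 <= a <= 1)%R ->
  (0 <= 1 - t * (1 - a) <= 1)%R.
Proof. move=> /andP[t0 t1] /andP[a0 a1]; apply/andP; split; nra. Qed.

Lemma bij_repr (T U : Type) (q : T -> U) (n : nat) (t0 : T) :
  (q @` setT #= `I_n)%card -> exists (ε : T -> nat) (ρ : nat -> T),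
  [/\ forall a, (ε a < n)%N, forall a b, ε a = ε b <-> q a = q b &
      forall i, (i < n)%N -> ε (ρ i) = i].
Proof.
move=> /pcard_eqP /bijPex [e be].
exists (fun a => e (q a)).
have : forall i, exists a, (i < n)%N -> e (q a) = i.
  move=> i; case: (ltnP i n) => [lt|ge]; last by exists t0.
  have [Q [a _ <-] eQ] := set_bij_surj be (lt : `I_n i).
  by exists a.
move=> /choice [ρ Hρ].
exists ρ; split => //.
- by move=> a; exact: (set_bij_homo be (imageP q I)).
- move=> a b; split=> [eab|->//].
  by apply: (set_bij_inj be) => //; apply/mem_set; apply: imageP.
Qed.

Lemma card_finT (T : finType) : ([set: T] #= `I_#|T|)%card.
Proof.
have -> : [set: T] = (@enum_val T predT) @` [set: 'I_#|T|].
  apply/seteqP; split => // x _; exists (enum_rank x) => //; exact: enum_rankK.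
apply: card_eq_trans (card_esym card_II).
apply: inj_card_eq => i j _ _; exact: enum_val_inj.
Qed.

Section TopGroup.
Variables (G : topologicalType) (mul : G -> G -> G) (inv : G -> G) (one : G).
Hypothesis tg : is_topological_group mul inv one.

Let mulA : forall x y z, mul x (mul y z) = mul (mul x y) z.
Proof. by case: tg. Qed.
Let mul1g : forall x, mul one x = x.
Proof. by move=> x; case: tg => _ /(_ x) []. Qed.
Let mulg1 : forall x, mul x one = x.
Proof. by move=> x; case: tg => _ /(_ x) []. Qed.
Let mulVg : forall x, mul (inv x) x = one.
Proof. by move=> x; case: tg => _ _ /(_ x) []. Qed.
Let mulgV : forall x, mul x (inv x) = one.
Proof. by move=> x; case: tg => _ _ /(_ x) []. Qed.
Let gl : grp_laws mul inv one.
Proof. by split. Qed.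
Let mulc : continuous (fun p : G * G => mul p.1 p.2).
Proof. by case: tg. Qed.
Let invc : continuous inv.
Proof. by case: tg => _ _ _ _ []. Qed.

Lemma tg_mul_cont (T : topologicalType) (f g : T -> G) :
  continuous f -> continuous g -> continuous (fun x => mul (f x) (g x)).
Proof.
move=> cf cg x; apply: (@continuous2_cvg _ _ _ _ _ _ f g mul).
- exact: (mulc (f x, g x)).
- exact: cf.
- exact: cg.
Qed.

Lemma tg_inv_cont (T : topologicalType) (f : T -> G) :
  continuous f -> continuous (fun x => inv (f x)).
Proof. by move=> cf x; apply: continuous_comp; [exact: cf|exact: invc]. Qed.

Local Notation C := (connected_component [set: G] one).

Lemma tgC1 : C one.
Proof. exact: connected_component_refl. Qed.

Lemma tg_conn_sub (B : set G) : connected B -> B one -> B `<=` C.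
Proof. by move=> cB B1; apply: connected_component_max. Qed.

Lemma tgCM a b : C a -> C b -> C (mul a b).
Proof.
move=> Ca Cb; apply: (@comp_mulP _ _ _ (mul a)) => //.
- by rewrite mulg1.
- by apply: (@tg_mul_cont G (fun=> a) id); [exact: cst_continuous|move=> ?; exact: cvg_id].
Qed.

Lemma tgCV a : C a -> C (inv a).
Proof.
move=> Ca; apply: (@tg_conn_sub (inv @` C)); last by exists a.
- apply: connected_continuous_connected; first exact: component_connected.
  exact: continuous_subspaceT.
- exists one; first exact: tgC1.
  by apply/esym/(ga_inv_uniq gl); rewrite mulg1.
Qed.

Variable X : topologicalType.
Definition pinv (f : {ptws X -> G}) : {ptws X -> G} := fun x => inv (f x).
Local Notation pmul := (@ptws_mul X G mul).
Local Notation pone := (ptws_one X G one).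

Lemma pgl : grp_laws pmul pinv pone.
Proof.
split.
- by move=> f g h; apply: funext => x; exact: mulA.
- by move=> f; apply: funext => x; exact: mul1g.
- by move=> f; apply: funext => x; exact: mulg1.
- by move=> f; apply: funext => x; exact: mulVg.
- by move=> f; apply: funext => x; exact: mulgV.
Qed.

Lemma Cp_one : Cp X G pone.
Proof. exact: cst_continuous. Qed.
Lemma Cp_mul f g : Cp X G f -> Cp X G g -> Cp X G (pmul f g).
Proof. exact: tg_mul_cont. Qed.
Lemma Cp_inv f : Cp X G f -> Cp X G (pinv f).
Proof. exact: tg_inv_cont. Qed.

Local Notation K := (connected_component (Cp X G) pone).

Lemma K1 : K pone.
Proof. exact/connected_component_refl/Cp_one. Qed.

Lemma K_val h : K h -> forall x, C (h x).
Proof.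
move=> Kh x.
have : (fun g : {ptws X -> G} => g x) @` K `<=` C.
  apply: tg_conn_sub; last by exists pone => //; exact: K1.
  apply: connected_continuous_connected; first exact: component_connected.
  exact/continuous_subspaceT/eval_cont.
by apply; exists h.
Qed.

Lemma comp_val f z w : Cp X G f -> connected_component [set: X] z w ->
  C (mul (inv (f z)) (f w)).
Proof.
move=> cf zw.
have : (fun y => mul (inv (f z)) (f y)) @` connected_component [set: X] z `<=` C.
  apply: tg_conn_sub; last by exists z; [exact: connected_component_refl|].
  apply: connected_continuous_connected; first exact: component_connected.
  apply/continuous_subspaceT/tg_mul_cont => //; exact: cst_continuous.
by apply; exists w.
Qed.

Lemma K_in (R : realType) : tychonoff_space R X ->
  path_component R [set: G] one = C ->
  forall h, Cp X G h -> (forall x, C (h x)) -> K h.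
Proof.
move=> [creg hsd] pc h ch hC.
have Ku : forall (x : X) (s : seq X) (c : G), x \notin s -> C c ->
    exists u, [/\ K u, u x = c & forall y, y \in s -> u y = one].
  move=> x s c xs Cc.
  rewrite -pc in Cc; case: Cc => B [B1 _ pB] Bc.
  have [γ [γc γ0 γ1 _]] := pB c one Bc B1.
  have cls : closed [set` s].
    have acc := hausdorff_accessible hsd.
    by move: acc => /accessible_finite_set_closed; apply; exact: finite_seq.
  have xs' : ~ [set` s] x by move=> /= xs2; rewrite xs2 in xs.
  have [f [fc f01 fx f1]] := creg x [set` s] cls xs'.
  pose Hf (t : R) : {ptws X -> G} := fun z => γ (1 - t * (1 - f z))%R.
  have Hfc : forall t, (0 <= t <= 1)%R -> Cp X G (Hf t).
    move=> t t01; apply/continuous_subspace_setT.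
    change {within [set: X], continuous (γ \o (fun z => 1 - t * (1 - f z))%R)}.
    have := @within_comp _ _ _ _ [set: X] (fun z => 1 - t * (1 - f z))%R γ γc; apply.
      apply: continuous_subspaceT; apply: aff_cont => //; exact: cst_continuous.
    by move=> z _; rewrite /= in_itv /=; apply: range01.
  exists (Hf 1%R); split.
  - have S : Hf @` `[0%R, 1%R] `<=` K.
      apply: connected_component_max.
      + exists 0%R; first by rewrite /= in_itv /= lexx ler01.
        by apply: funext => z; rewrite /Hf mul0r subr0.
      + by move=> _ [t t01 <-]; apply: Hfc; move: t01; rewrite /= in_itv.
      + apply: connected_continuous_connected; first exact: segment_connected.
        apply: ptws_cont => z.
        change {within `[0%R, 1%R], continuous (γ \o (fun t => 1 - t * (1 - f z))%R)}.
        have := @within_comp _ _ _ _ (`[0%R, 1%R] : set R) (fun t => 1 - t * (1 - f z))%R γ γc; apply.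
          apply: continuous_subspaceT; apply: aff_cont; [by move=> ?; exact: cvg_id|exact: cst_continuous].
        by move=> t; rewrite /= !in_itv /= => t01; apply: range01.
    by apply: S; exists 1%R => //; rewrite /= in_itv /= lexx ler01.
  - by rewrite /Hf fx subr0 mul1r subrr.
  - by move=> y ys; rewrite /Hf f1 // subrr mulr0 subr0.
have P : forall s : seq X, exists g, K g /\ forall y, y \in s -> g y = h y.
  elim=> [|x s [g [Kg gs]]]; first by exists pone; split => //; exact: K1.
  have Cg : Cp X G g := connected_component_sub Kg.
  case: (boolP (x \in s)) => xs.
    exists g; split => // y; rewrite inE => /orP[/eqP->|]; exact: gs.
  have Cc : C (mul (inv (g x)) (h x)) := tgCM _ _ (tgCV _ (K_val _ Kg x)) (hC x).
  have [u [Kuu ux us]] := Ku x s _ xs Cc.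
  exists (pmul g u); split.
    apply: (@comp_mulP _ _ _ (pmul g)) => //.
    - suff -> : pmul g pone = g by [].
      by apply: funext => z; rewrite /ptws_mul /ptws_one mulg1.
    - apply: ptws_cont => z; apply: tg_mul_cont; [exact: cst_continuous|exact: eval_cont].
    - by move=> y; apply: Cp_mul.
  move=> y; rewrite inE => /orP[/eqP->|ys]; rewrite /ptws_mul.
    by rewrite ux (ga_mulKVg gl).
  by rewrite us // mulg1; exact: gs.
have clh : closure K h.
  move=> N Nh; have [s Hs] := ptws_nbhs_fin _ _ _ _ Nh.
  have [g [Kg gs]] := P s; exists g; split => //; apply: Hs => y ys; exact: gs.
have : (K `|` [set h]) `<=` K.
  apply: connected_component_max.
  - by left; exact: K1.
  - by move=> y [/connected_component_sub //|->].
  - by apply: connected_add_closure => //; exact: component_connected.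
by apply; right.
Qed.


Variable R : realType.
Hypothesis tych : tychonoff_space R X.
Hypothesis pc : path_component R [set: G] one = C.

Lemma gcos_eq a b : [set mul a h | h in C] = [set mul b h | h in C] <->
  C (mul (inv a) b).
Proof. exact: (ga_coset_eqP gl C tgC1 tgCM tgCV). Qed.

Lemma KM f g : K f -> K g -> K (pmul f g).
Proof.
move=> Kf Kg; apply: (K_in _ tych pc).
  by apply: Cp_mul; [exact: (connected_component_sub Kf)|exact: (connected_component_sub Kg)].
by move=> x; apply: tgCM; [exact: (K_val _ Kf)|exact: (K_val _ Kg)].
Qed.

Lemma KV f : K f -> K (pinv f).
Proof.
move=> Kf; apply: (K_in _ tych pc).
  by apply: Cp_inv; exact: (connected_component_sub Kf).
by move=> x; apply: tgCV; exact: (K_val _ Kf).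
Qed.

Lemma cos_eq f g : Cp X G f -> Cp X G g ->
  [set pmul f k | k in K] = [set pmul g k | k in K] <->
  forall x, C (mul (inv (f x)) (g x)).
Proof.
move=> cf cg; rewrite (ga_coset_eqP pgl K K1 KM KV); split.
  by move=> Kfg x; exact: (K_val _ Kfg x).
move=> H; apply: (K_in _ tych pc) => //.
by apply: Cp_mul => //; exact: Cp_inv.
Qed.

Lemma comp_open_fin : finite_set (components X) ->
  forall z, open (connected_component [set: X] z).
Proof.
move=> fin z.
have -> : connected_component [set: X] z =
    ~` \bigcup_(Q in components X `\` [set connected_component [set: X] z]) Q.
  apply/seteqP; split.
    move=> y zy [Q [[w _ <-] nQ] wy]; apply: nQ.
    by rewrite /= (same_connected_component wy) (same_connected_component zy).
  move=> y ny; apply: contrapT => nzy; apply: ny.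
  exists (connected_component [set: X] y); last exact: connected_component_refl.
  split; first by exists y.
  move=> /= e; apply: nzy; rewrite -e; exact: connected_component_refl.
apply: closed_openC; apply: closed_bigcup; first exact: finite_setD.
by move=> _ [[w _ <-] _]; apply: component_closed; exact: closedT.
Qed.

Lemma count_fin n k : (left_cosets mul [set: G] C #= `I_n)%card ->
  [set: X] !=set0 -> (components X #= `I_k)%card ->
  (left_cosets pmul (Cp X G) K #= `I_(n ^ k))%card.
Proof.
move=> hGC [x0 _] hCk.
have [ε [ρ [εlt εeq Hρ]]] := bij_repr _ _ _ _ one hGC.
have [κ [π [κlt κeq Hπ]]] := bij_repr _ _ _ _ x0 hCk.
have fin : finite_set (components X) by exists k.
pose fφ (φ : {ffun 'I_k -> 'I_n}) : {ptws X -> G} :=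
  fun z => ρ (val (φ (Ordinal (κlt z)))).
have fφc φ : Cp X G (fφ φ).
  move=> z; apply: cvg_near_cst.
  have : nbhs z (connected_component [set: X] z).
    apply: open_nbhs_nbhs; split; first exact: comp_open_fin.
    exact: connected_component_refl.
  apply: filterS => y zy; rewrite /fφ; congr (ρ (val (φ _))); apply: val_inj => /=.
  by apply/κeq; rewrite (same_connected_component zy).
pose Ψ φ := [set pmul (fφ φ) h | h in K].
have Ψinj : injective Ψ.
  move=> φ ψ /(cos_eq _ _ (fφc φ) (fφc ψ)) H; apply/ffunP => i; apply: val_inj.
  have Ei : Ordinal (κlt (π i)) = i by apply: val_inj; rewrite /= Hπ.
  have := H (π i); rewrite /fφ Ei => /gcos_eq /εeq.
  by rewrite !Hρ ?ltn_ord.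
have ΨCos : Ψ @` setT = left_cosets pmul (Cp X G) K.
  apply/seteqP; split.
    by move=> _ [φ _ <-]; exists (fφ φ) => //; exact: fφc.
  move=> _ [f cf <-].
  exists [ffun i : 'I_k => (Ordinal (εlt (f (π i))) : 'I_n)] => //.
  apply/esym/(cos_eq _ _ cf (fφc _)) => z; rewrite /fφ ffunE /=.
  set w := π (κ z).
  have ew : connected_component [set: X] z w.
    have : κ w = κ z by rewrite /w Hπ.
    move=> /κeq <-; exact: connected_component_refl.
  have C1 := comp_val f z w cf ew.
  have C2 : C (mul (inv (f w)) (ρ (ε (f w)))).
    by apply/gcos_eq/εeq; rewrite Hρ ?εlt.
  by have := tgCM _ _ C1 C2; rewrite -mulA (ga_mulKVg gl).
have E : #|{ffun 'I_k -> 'I_n}| = (n ^ k)%N by rewrite card_ffun !card_ord.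
rewrite -ΨCos -E; apply: (card_eq_trans _ (card_finT _)).
by apply: inj_card_eq => φ ψ _ _; exact: Ψinj.
Qed.

Lemma clopen_comp_sub (U : set X) z : open U -> closed U -> U z ->
  connected_component [set: X] z `<=` U.
Proof.
move=> oU cU Uz.
have e : connected_component [set: X] z `&` U = connected_component [set: X] z.
  have := @component_connected X [set: X] z; apply.
  - by exists z; split => //; exact: connected_component_refl.
  - by exists U.
  - by exists U.
by rewrite -e => y [].
Qed.

Lemma comp_finite n : (left_cosets mul [set: G] C #= `I_n)%card -> (1 < n)%N ->
  finite_set (left_cosets pmul (Cp X G) K) -> finite_set (components X).
Proof.
move=> hGC n1 finCos.
have [ε [ρ [εlt εeq Hρ]]] := bij_repr _ _ _ _ one hGC.
pose a0 := mul (inv (ρ 0)) (ρ 1).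
have na0 : ~ C a0.
  move=> /gcos_eq /εeq; rewrite !Hρ //; exact: ltnW.
pose Clo := [set U : set X | open U /\ closed U].
pose fU (U : set X) : {ptws X -> G} := fun z => if `[< U z >] then a0 else one.
have fUc U : Clo U -> Cp X G (fU U).
  move=> [oU cU] z; apply: cvg_near_cst.
  have [Uz|nUz] := pselect (U z).
    have : nbhs z U by apply: open_nbhs_nbhs.
    by apply: filterS => y Uy; rewrite /fU !asboolT.
  have : nbhs z (~` U) by apply: open_nbhs_nbhs; split => //; exact: closed_openC.
  by apply: filterS => y Uy; rewrite /fU !asboolF.
pose F U := [set pmul (fU U) h | h in K].
have Finj : {in Clo &, injective F}.
  move=> U V /set_mem CU /set_mem CV /(cos_eq _ _ (fUc _ CU) (fUc _ CV)) H.
  apply/seteqP; split => z Hz; apply: contrapT => nz; have := H z; rewrite /fU.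
  - rewrite (asboolT Hz) (asboolF nz) mulg1 => /tgCV.
    by rewrite (ga_invK gl).
  - by rewrite (asboolT Hz) (asboolF nz) (ga_inv1 gl) mul1g.
have finClo : finite_set Clo.
  rewrite -(eq_finite_set (inj_card_eq Finj)).
  apply: (sub_finite_set _ finCos); move=> _ [U CU <-]; exists (fU U) => //.
  exact: fUc.
apply: (sub_finite_set _ finClo) => _ [z _ <-].
pose D := [set U | Clo U /\ U z].
pose Q := \bigcap_(U in D) U.
have DQ : forall U, D U -> Q `<=` U by move=> U DU y; apply.
have finD : finite_set D by apply: (sub_finite_set _ finClo) => U [].
have cQ : closed Q by apply: closed_bigI => U [[]].
have oQ : open Q.
  rewrite -[Q]setCK; apply: closed_openC; rewrite setC_bigcap.
  by apply: closed_bigcup => // U [[oU _] _]; exact: open_closedC.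
have Qz : Q z by move=> U [].
have connQ : connected Q.
  move=> B [b Bb] [W0 oO BO] [E cE BE].
  have oB : open B by rewrite BO; exact: openI.
  have cB : closed B by rewrite BE; exact: closedI.
  have BQ : B `<=` Q by rewrite BO => y [].
  have [Bz|nBz] := pselect (B z).
    by apply/seteqP; split => //; apply: DQ.
  exfalso.
  have : Q `<=` ~` B.
    apply: DQ; split => //; split; first exact: closed_openC.
    exact: open_closedC.
  by move=> /(_ b (BQ b Bb)); apply.
have e : connected_component [set: X] z = Q.
  apply/seteqP; split.
    by move=> y zy U [[oU cU] Uz]; exact: (clopen_comp_sub _ _ oU cU Uz _ zy).
  exact: connected_component_max.
by rewrite e; split.
Qed.
End TopGroup.

Theorem proposition8p6 (R : realType) (G : topologicalType)
  (mul : G -> G -> G) (inv : G -> G) (one : G) (m n : nat) :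
  is_topological_group mul inv one ->
  (1 <= m)%N -> (2 <= n)%N ->
  path_component R [set: G] one = connected_component [set: G] one ->
  has_index mul [set: G] (connected_component [set: G] one) n ->
  forall X : topologicalType, tychonoff_space R X -> [set: X] !=set0 ->
  ((components X #= `I_m)%card <->
   has_index (@ptws_mul X G mul) (Cp X G)
     (connected_component (Cp X G) (ptws_one X G one)) (n ^ m)%N).
Proof.
move=> tg m1 n2 pc hGC X tych Xne; rewrite /has_index in hGC *.
split=> [hC|hK].
  exact: (count_fin _ _ _ _ tg X R tych pc _ _ hGC Xne hC).
have finCos : finite_set (left_cosets (ptws_mul (X:=X) (G:=G) mul) (Cp X G)
     (connected_component (Cp X G) (ptws_one X G one))) by exists (n ^ m)%N.
have [k hk] := comp_finite _ _ _ _ tg X R tych pc _ hGC n2 finCos.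
have hk' := count_fin _ _ _ _ tg X R tych pc _ _ hGC Xne hk.
have /card_eq_II/eqP : (`I_(n ^ k) #= `I_(n ^ m))%card.
  exact: card_eq_trans (card_esym hk') hK.
by rewrite eqn_exp2l // => /eqP <-.
Qed.
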